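(* Let $S:\mathbb{R}^m\times\mathbb{R}^n\to\mathbb{R}^q$ be bilinear with lifted operator $\mathscr{S}$, let $\mathcal{K}'\subseteq\mathbb{R}^{m\times n}$, $\mathcal{M}=\mathcal{K}'-\mathcal{K}'$, and assume $\mathcal{N}(\mathscr{S},1)\cap\mathcal{M}=\{0\}$. Let $X\in\mathcal{N}(\mathscr{S},2)\cap\mathcal{M}\setminus\{0\}$ and $\delta\in(0,1)$. If $x\in\mathbb{R}^m$ has independent entries each with the symmetric Bernoulli distribution ($\Pr(x_i=1)=\Pr(x_i=-1)=1/2$), then $$\Pr\big(\|P_{\mathcal{C}(X)}x\|_2^2\ge(1-\delta)\|x\|_2^2\big)\le\exp\Big[-\tfrac{m(1-\delta)}{4}+\log4\Big].$$
   Context: For $j=1,\dots,q$ let $S_j$ be the unique matrix with $(S(x,y))_j=x^TS_jy$; the lifted operator is $(\mathscr{S}(W))_j=\operatorname{tr}(S_j^TW)$. $\mathcal{N}(\mathscr{S},k)=\{X:\operatorname{rank}(X)\le k,\ \mathscr{S}(X)=0\}$; $\mathcal{K}'-\mathcal{K}'=\{X_1-X_2:X_1,X_2\in\mathcal{K}'\}$. $\mathcal{C}(X)$ is the column space of $X$ and $P_{\mathcal{C}(X)}$ the orthogonal projection onto it. *)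

(* Defs.v *)
From HB Require Import structures.
From mathcomp Require Import all_boot all_order all_algebra.
From mathcomp Require Import reals.
From mathcomp.analysis Require Import sequences exp.
Set Implicit Arguments. Unset Strict Implicit. Unset Printing Implicit Defensive.
Import Order.TTheory GRing.Theory Num.Theory.
Local Open Scope ring_scope.

Section Defs.
Variable R : realType.

Definition bilinear_map m n q (S : 'cV[R]_m -> 'cV[R]_n -> 'cV[R]_q) : Prop :=
  (forall (a : R) x1 x2 y, S (a *: x1 + x2) y = a *: S x1 y + S x2 y) /\
  (forall (a : R) x y1 y2, S x (a *: y1 + y2) = a *: S x y1 + S x y2).

(* S_j : the unique matrix with (S(x,y))_j = x^T S_j y. *)
Definition Smat m n q (S : 'cV[R]_m -> 'cV[R]_n -> 'cV[R]_q) (j : 'I_q)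
  : 'M[R]_(m, n) :=
  \matrix_(a < m, b < n) (S (delta_mx a 0) (delta_mx b 0)) j 0.

Definition liftS m n q (S : 'cV[R]_m -> 'cV[R]_n -> 'cV[R]_q)
  (W : 'M[R]_(m, n)) : 'cV[R]_q :=
  \col_(j < q) \tr ((Smat S j)^T *m W).

Definition Nset m n q (S : 'cV[R]_m -> 'cV[R]_n -> 'cV[R]_q) (k : nat)
  (X : 'M[R]_(m, n)) : Prop :=
  (\rank X <= k)%N /\ liftS S X = 0.

Definition diffset m n (K : 'M[R]_(m, n) -> Prop) (X : 'M[R]_(m, n)) : Prop :=
  exists X1 X2, K X1 /\ K X2 /\ X = X1 - X2.

(* Orthogonal projection onto the column space C(X):
   with U a row basis of the row space of X^T (rows of U form a basis of C(X)),
   P = U^T (U U^T)^{-1} U. *)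
Definition colproj m n (X : 'M[R]_(m, n)) : 'M[R]_m :=
  let U := row_base (X^T) in (U^T *m invmx (U *m U^T)) *m U.

Definition sqnorm m (v : 'cV[R]_m) : R := \sum_(i < m) v i 0 ^+ 2.

Definition signvec m (s : {ffun 'I_m -> bool}) : 'cV[R]_m :=
  \col_(i < m) (if s i then 1 else -1).

(* Probability, for x with i.i.d. symmetric Bernoulli (+-1) entries,
   of the event E, i.e. (#{s in {+-1}^m | E s}) / 2^m. *)
Definition rademacher_prob m (E : 'cV[R]_m -> bool) : R :=
  #|[set s : {ffun 'I_m -> bool} | E (signvec s)]|%:R / (2 ^+ m).

End Defs.

(* Main.v *)
Require Import Defs.
From HB Require Import structures.
From mathcomp Require Import all_boot all_order all_algebra.
From mathcomp Require Import all_classical all_reals all_analysis.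
From mathcomp Require Import zify ring lra.
Import Order.TTheory GRing.Theory Num.Theory.
Local Open Scope ring_scope.

Section Cosh.
Variable R : realType.
Implicit Types y : R.

Let g y k := exp_coeff y k + exp_coeff (- y) k.

Let g_odd y j : g y (j.*2.+1) = 0.
Proof.
rewrite /g /exp_coeff /= !exprS -!mul2n !exprM sqrrN mulNr mulNr addrN.
by [].
Qed.

Let g_even y j : g y (j.*2) = 2 * ((y ^+ 2) ^+ j / (j.*2)`!%:R).
Proof. by rewrite /g /exp_coeff /= -!mul2n !exprM sqrrN mulr2n mulrDl !mul1r. Qed.

Let g_ge0 y k : 0 <= g y k.
Proof.
rewrite -(odd_double_half k); case: (odd k) => /=.
  by rewrite add1n g_odd.
rewrite add0n g_even mulr_ge0 // divr_ge0 // exprn_ge0 // sqr_ge0.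
by [].
Qed.

Let fact_le j : (2 ^ j * j`! <= (j.*2)`!)%N.
Proof.
elim: j => [//|j IH].
rewrite doubleS !factS expnS.
have H1 : (2 * j.+1 <= (j.*2).+2 * (j.*2).+1)%N by nia.
have := leq_mul H1 IH.
rewrite -!mulnA (mulnCA j.+1) => H.
apply: leq_trans H _.
by rewrite !mulnA.
Qed.

Let sum_g2 y n : \sum_(0 <= k < n.*2) g y k =
  \sum_(0 <= j < n) 2 * ((y ^+ 2) ^+ j / (j.*2)`!%:R).
Proof.
elim: n => [|n IH]; first by rewrite !big_geq.
rewrite doubleS !big_nat_recr //= IH g_odd addr0 g_even //.
Qed.

Let partial_le y n : \sum_(0 <= k < n) g y k <=
  2 * \sum_(0 <= k < n) exp_coeff (y ^+ 2 / 2) k.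
Proof.
apply: (@le_trans _ _ (\sum_(0 <= k < n.*2) g y k)).
  rewrite -addnn (big_cat_nat _ (leq_addr n n)) //= lerDl.
  by apply: sumr_ge0 => k _; apply: g_ge0.
rewrite sum_g2 mulr_sumr; apply: ler_sum => j _.
rewrite ler_pM2l // /exp_coeff /= expr_div_n mulrAC -mulrA.
have hy : 0 <= (y ^+ 2) ^+ j by rewrite exprn_ge0 // sqr_ge0.
rewrite ler_wpM2l //.
rewrite -invfM -natrX -natrM lef_pV2 ?posrE ?ltr0n ?fact_gt0 ?muln_gt0 ?expn_gt0 ?fact_gt0 //.
by rewrite ler_nat mulnC fact_le.
Qed.

Lemma cosh_le y : expR y + expR (- y) <= 2 * expR (y ^+ 2 / 2).
Proof.
rewrite /expR -limD ?is_cvg_series_exp_coeff //.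
apply: (@le_trans _ _ (limn (2 *: series (exp_coeff (y ^+ 2 / 2))))).
  apply: ler_lim.
  - by apply: is_cvgD; apply: is_cvg_series_exp_coeff.
  - by apply: is_cvgZr; apply: is_cvg_series_exp_coeff.
  near=> n => /=.
  rewrite !fctE /series /= -big_split /=.
  exact: partial_le.
rewrite limZl_tmp //.
all: exact: is_cvg_series_exp_coeff.
Unshelve. all: by end_near.
Qed.
End Cosh.

Section QR.
Variable R : realType.

Lemma qr r m (U : 'M[R]_(r, m)) : row_free U ->
  exists W : 'M[R]_(r, m), exists A : 'M[R]_r,
    [/\ W *m W^T = 1%:M, A \in unitmx & U = A *m W].
Proof.
elim: r U => [|r IH] U fU.
  exists 0, 1%:M; split.
  - by apply/matrixP => -[].
  - by rewrite unitmx1.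
  - by apply/matrixP => -[].
pose u : 'rV[R]_m := usubmx (U : 'M[R]_(1 + r, m)).
pose U' : 'M[R]_(r, m) := dsubmx (U : 'M[R]_(1 + r, m)).
have eU : U = col_mx u U' by rewrite vsubmxK.
have rkU : \rank U = r.+1 by apply/eqP.
have fU' : row_free U'.
  rewrite /row_free eqn_leq rank_leq_row /=.
  have := (mxrank_adds_leqif u U').1.
  rewrite addsmxE -eU rkU => H.
  have := rank_leq_row u. lia.
have [W' [A' [oW' uA' eU']]] := IH U' fU'.
pose c := u *m W'^T.
pose v := u - c *m W'.
have v0 : v != 0.
  apply/eqP => v0.
  have euc : u = c *m W'.
    by apply/eqP; rewrite -subr_eq0; apply/eqP.
  have eu : u = (c *m invmx A') *m U'.
    by rewrite eU' -mulmxA (mulmxA (invmx A')) mulVmx // mul1mx.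
  have : (\rank U <= r)%N.
    rewrite eU eu -[U' in col_mx _ U']mul1mx -mul_col_mx.
    exact: leq_trans (mxrankM_maxr _ _) (rank_leq_row U').
  by rewrite rkU ltnn.
pose s := (v *m v^T) 0 0.
have sE : s = \sum_j v 0 j ^+ 2.
  by rewrite /s [LHS]mxE; apply: eq_bigr => j _; rewrite [v^T j 0]mxE expr2.
have s_pos : 0 < s.
  rewrite lt_def; apply/andP; split; last first.
    by rewrite sE; apply: sumr_ge0 => j _; rewrite sqr_ge0.
  rewrite sE; apply: contra v0 => /eqP/psumr_eq0P H.
  apply/eqP/rowP => j; have := H (fun i _ => sqr_ge0 (v 0 i)) j isT.
  by move=> /eqP; rewrite sqrf_eq0 => /eqP ->; rewrite mxE.
pose nv := Num.sqrt s.
have nv_pos : 0 < nv by rewrite sqrtr_gt0.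
have nv0 : nv != 0 by rewrite gt_eqF.
pose w := nv^-1 *: v.
exists (col_mx w W' : 'M[R]_(r.+1, m)), (block_mx (nv%:M : 'M[R]_1) c 0 A' : 'M[R]_(r.+1)).
have vW : v *m W'^T = 0.
  by rewrite /v mulmxBl -mulmxA oW' mulmx1 subrr.
have wW : w *m W'^T = 0 by rewrite /w -scalemxAl vW scaler0.
have Ww : W' *m w^T = 0.
  by rewrite -[W' *m w^T]trmxK trmx_mul trmxK wW trmx0.
have ww : w *m w^T = 1%:M.
  rewrite /w linearZ /= -scalemxAl -scalemxAr scalerA (mx11_scalar (v *m v^T)).
  rewrite -/s scale_scalar_mx; congr (_%:M).
  have -> : s = nv ^+ 2 by rewrite sqr_sqrtr // ltW.
  by field.
split.
- have H : (col_mx w W' : 'M[R]_(1 + r, m)) *m (col_mx w W')^T = 1%:M.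
    by rewrite tr_col_mx mul_col_row ww wW Ww oW' -scalar_mx_block.
  exact: H.
- rewrite unitmxE (det_ublock (nv%:M : 'M[R]_1) c A') unitrM.
  by rewrite -(unitmxE A') uA' andbT det_scalar1 unitfE.
- have H : (block_mx (nv%:M : 'M[R]_1) c 0 A' : 'M[R]_(1 + r)) *m
      (col_mx w W' : 'M[R]_(1 + r, m)) = U.
    rewrite mul_block_col mul0mx add0r -eU' mul_scalar_mx /w scalerA mulfV //.
    by rewrite scale1r /v subrK.
  exact: (esym H).
Qed.

Lemma colproj_eq m n (X : 'M[R]_(m, n)) : exists W : 'M[R]_(\rank X^T, m),
  W *m W^T = 1%:M /\ colproj X = W^T *m W.
Proof.
have [W [A [oW uA eU]]] := qr _ _ _ (row_base_free X^T).
exists W; split=> //.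
rewrite /colproj eU.
have eG : A *m W *m (A *m W)^T = A *m A^T.
  by rewrite trmx_mul mulmxA -(mulmxA A) oW mulmx1.
rewrite eG trmx_mul.
have uG : A *m A^T \in unitmx by rewrite unitmx_mul unitmx_tr uA.
have AY : A *m (A^T *m invmx (A *m A^T) *m A) = A.
  by rewrite !mulmxA mulmxV // mul1mx.
have Y1 : A^T *m invmx (A *m A^T) *m A = 1%:M.
  by rewrite -[LHS](mulKmx uA) AY mulVmx.
have -> : W^T *m A^T *m invmx (A *m A^T) *m (A *m W) =
  W^T *m (A^T *m invmx (A *m A^T) *m A) *m W by rewrite !mulmxA.
by rewrite Y1 mulmx1.
Qed.
End QR.


Section Main.
Variable R : realType.

Definition sg (b : bool) : R := if b then 1 else -1.

Lemma mgf m (u : 'I_m -> R) :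
  \sum_(s : {ffun 'I_m -> bool}) expR (\sum_i u i * sg (s i))
  <= 2 ^+ m * expR ((\sum_i u i ^+ 2) / 2).
Proof.
under eq_bigr => s _ do rewrite expR_sum.
rewrite -(bigA_distr_bigA (fun i b => expR (u i * sg b))).
apply: (@le_trans _ _ (\prod_(i < m) (2 * expR (u i ^+ 2 / 2)))).
  apply: ler_prod => i _; rewrite big_bool /= /sg mulr1 mulrN1; apply/andP; split.
    by rewrite addr_ge0 // expR_ge0.
  exact: cosh_le.
by rewrite big_split /= prodr_const card_ord -expR_sum mulr_suml.
Qed.

Lemma one_le_exps (b z : R) : 0 <= b -> b <= `|z| ->
  1 <= expR (b * z - b ^+ 2) + expR (- (b * z) - b ^+ 2).
Proof.
move=> b0 bz; case: (leP 0 z) => hz.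
  rewrite ger0_norm // in bz.
  apply: (@le_trans _ _ (expR (b * z - b ^+ 2))).
    by rewrite -expR0 ler_expR; nra.
  by rewrite lerDl expR_ge0.
rewrite ltr0_norm // in bz.
apply: (@le_trans _ _ (expR (- (b * z) - b ^+ 2))).
  by rewrite -expR0 ler_expR; nra.
by rewrite lerDr expR_ge0.
Qed.

Lemma sqnormE m (v : 'cV[R]_m) : sqnorm v = (v^T *m v) 0 0.
Proof. by rewrite /sqnorm mxE; apply: eq_bigr => i _; rewrite mxE expr2. Qed.

Lemma sqnorm_trW r m (W : 'M[R]_(r, m)) (y : 'cV[R]_r) :
  W *m W^T = 1%:M -> sqnorm (W^T *m y) = sqnorm y.
Proof.
move=> oW; rewrite !sqnormE trmx_mul trmxK.
by rewrite -mulmxA (mulmxA W) oW mul1mx.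
Qed.

End Main.
Arguments sg {R}.
Arguments mgf {R m}.
Arguments one_le_exps {R b z}.
Arguments sqnorm_trW {R r m W y}.
Arguments colproj_eq {R m n}.

Theorem lemma4 (R : realType) (m n q : nat)
  (S : 'cV[R]_m -> 'cV[R]_n -> 'cV[R]_q) (K : 'M[R]_(m, n) -> Prop)
  (X : 'M[R]_(m, n)) (delta : R) :
  bilinear_map S ->
  (forall Y : 'M[R]_(m, n), (Nset S 1 Y /\ diffset K Y) <-> Y = 0) ->
  Nset S 2 X -> diffset K X -> X != 0 ->
  0 < delta < 1 ->
  rademacher_prob
    (fun x : 'cV[R]_m => (1 - delta) * sqnorm x <= sqnorm (colproj X *m x))
  <= expR (- ((m%:R * (1 - delta)) / 4) + ln 4).
Proof.
move=> _ _ [rk2 _] _ X0 /andP[d0 d1].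
set r := \rank X^T.
have r2 : (r <= 2)%N by rewrite /r mxrank_tr.
have r1 : (0 < r)%N by rewrite /r mxrank_tr lt0n mxrank_eq0.
have [W [oW eP]] := colproj_eq X.
set t := (1 - delta) * m%:R.
have t0 : 0 <= t by rewrite mulr_ge0 // subr_ge0 ltW.
set b := Num.sqrt (t / 2).
have b0 : 0 <= b := sqrtr_ge0 _.
have bb : b ^+ 2 = t / 2 by rewrite sqr_sqrtr // divr_ge0.
pose z (k : 'I_r) (s : {ffun 'I_m -> bool}) := \sum_i W k i * sg (s i).
pose F k s := expR (b * z k s - b ^+ 2) + expR (- (b * z k s) - b ^+ 2).
have Wx (s : {ffun 'I_m -> bool}) k : (W *m signvec R s) k 0 = z k s.
  by rewrite mxE; apply: eq_bigr => i _; rewrite mxE.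
have sqx (s : {ffun 'I_m -> bool}) : sqnorm (signvec R s) = m%:R.
  rewrite /sqnorm (eq_bigr (fun _ => 1)); first by rewrite sumr_const card_ord.
  by move=> i _; rewrite mxE; case: (s i); rewrite ?expr1n ?sqrrN ?expr1n.
have Px (s : {ffun 'I_m -> bool}) : sqnorm (colproj X *m signvec R s) = \sum_k z k s ^+ 2.
  rewrite eP -mulmxA sqnorm_trW // /sqnorm.
  by apply: eq_bigr => k _; rewrite Wx.
have pt (s : {ffun 'I_m -> bool}) : (nat_of_bool ((1 - delta) * sqnorm (signvec R s) <= sqnorm (colproj X *m signvec R s))%R)%:R
    <= \sum_k F k s.
  case E: ((1 - delta) * sqnorm (signvec R s) <= sqnorm (colproj X *m signvec R s)) => /=.
  - move: E; rewrite sqx Px -/t => E.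
    have k0 : 'I_r := Ordinal r1.
    case: (arg_maxP (fun k => z k s ^+ 2) (isT : predT k0)) => k _ hk.
    have tz : t <= 2 * z k s ^+ 2.
      apply: (le_trans E).
      apply: (le_trans (ler_sum _ (fun j _ => hk j isT))).
      rewrite sumr_const card_ord -[_ *+ r]mulr_natl ler_wpM2r ?sqr_ge0 //.
      by rewrite (ler_nat R r 2).
    have bz : b <= `|z k s|.
      rewrite -sqrtr_sqr ler_sqrt ?sqr_ge0 //; lra.
    apply: (le_trans _ (_ : F k s <= _)).
      by rewrite mulr1n; apply: one_le_exps.
    rewrite (bigD1 k) //= lerDl; apply: sumr_ge0 => j _.
    by rewrite addr_ge0 ?expR_ge0.
  - by rewrite mulr0n; apply: sumr_ge0 => k _; rewrite addr_ge0 ?expR_ge0.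
have sumF1 k (e : R) : e ^+ 2 = 1 ->
    \sum_s expR (e * (b * z k s) - b ^+ 2) <= 2 ^+ m * expR (- (t / 4)).
  move=> e2.
  have -> : \sum_s expR (e * (b * z k s) - b ^+ 2) =
      expR (- b ^+ 2) * \sum_(s : {ffun 'I_m -> bool})
        expR (\sum_i (e * b * W k i) * sg (s i)).
    rewrite mulr_sumr; apply: eq_bigr => s _.
    rewrite expRD mulrC; congr (_ * _); congr expR.
    by rewrite /z !mulr_sumr; apply: eq_bigr => i _; rewrite !mulrA.
  apply: (le_trans (ler_wpM2l (expR_ge0 _) (mgf _))).
  have -> : \sum_i (e * b * W k i) ^+ 2 = b ^+ 2.
    have := congr1 (fun M : 'M[R]_r => M k k) oW.
    rewrite !mxE eqxx mulr1n => H.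
    under eq_bigr => i _ do rewrite exprMn.
    rewrite -mulr_sumr exprMn e2 mul1r -[RHS]mulr1 -H; congr (_ * _).
    by apply: eq_bigr => i _; rewrite mxE expr2.
  rewrite mulrCA -expRD bb; apply: ler_wpM2l; first by rewrite exprn_ge0.
  by rewrite ler_expR; lra.
have sumF k : \sum_s F k s <= 2 * (2 ^+ m * expR (- (t / 4))).
  rewrite big_split /= mulr2n mulrDl !mul1r; apply: lerD.
    rewrite (eq_bigr (fun s => expR (1 * (b * z k s) - b ^+ 2))).
      exact: (sumF1 k 1 (expr1n _ _)).
    by move=> s _; rewrite mul1r.
  rewrite (eq_bigr (fun s => expR (-1 * (b * z k s) - b ^+ 2))).
    by apply: (sumF1 k (-1)); rewrite sqrrN expr1n.
  by move=> s _; rewrite mulN1r.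
have cnt : #|[set s : {ffun 'I_m -> bool} |
      (1 - delta) * sqnorm (signvec R s) <= sqnorm (colproj X *m signvec R s)]|%:R
    = \sum_s (nat_of_bool ((1 - delta) * sqnorm (signvec R s) <= sqnorm (colproj X *m signvec R s))%R)%:R :> R.
  rewrite -sum1_card natr_sum big_mkcond /=; apply: eq_bigr => s _.
  by rewrite inE; case: (_ <= _).
rewrite /rademacher_prob cnt.
have H2 : \sum_k \sum_s F k s <= 4 * (2 ^+ m * expR (- (t / 4))).
  apply: (le_trans (ler_sum _ (fun k _ => sumF k))).
  rewrite sumr_const card_ord -[_ *+ r]mulr_natl.
  have -> : r%:R * (2 * (2 ^+ m * expR (- (t / 4)))) =
    (r%:R * 2) * (2 ^+ m * expR (- (t / 4))) by rewrite !mulrA.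
  rewrite ler_wpM2r //.
  by rewrite -natrM (ler_nat R _ 4); lia.
rewrite expRD lnK ?posrE // (mulrC m%:R) -/t.
rewrite ler_pdivrMr ?exprn_gt0 //.
apply: (le_trans (ler_sum _ (fun s _ => pt s))).
rewrite exchange_big /=; apply: (le_trans H2).
rewrite le_eqVlt; apply/orP; left; apply/eqP; ring.
Qed.
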